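(* Let $1\le p\le\infty$, let $X,Y$ be real Banach spaces, let $U\subseteq X$ be an open convex subset, and let $f:U\to Y$ be a (Fréchet) differentiable mapping such that for every $U$-bounded Dunford-Pettis set $K\subset U$, the set $f'(K)$ is a $p$-$(DPL)$ set in $L(X,Y)$. Then $f$ is $p$-Right sequentially continuous.
   Context: A subset $B\subset U$ is $U$-bounded if it is bounded and its distance to the boundary of $U$ is strictly positive; a sequence is $U$-bounded if its set of terms is. A sequence $(x_n)$ in $X$ is weakly $p$-summable if $(x^*(x_n))_n\in\ell_p$ for every $x^*\in X^*$ (for $p=\infty$: weakly null). A sequence $(x_n)$ is weakly $p$-Cauchy if $(x_{m_k}-x_{n_k})_k$ is weakly $p$-summable for all strictly increasing index sequences $(m_k),(n_k)$. A bounded set $K\subset X$ is a Dunford-Pettis set if every weakly null sequence in $X^*$ converges to $0$ uniformly on $K$. A $p$-Right null (resp. $p$-Right Cauchy) sequence is a weakly $p$-summable (resp. weakly $p$-Cauchy) sequence whose set of terms is a Dunford-Pettis set. A set $K\subset L(X,Y)$ is a $p$-$(DPL)$ set if $\lim_n\sup_{T\in K}\|T(x_n)\|=0$ for every $p$-Right null sequence $(x_n)$ in $X$. A mapping $f:U\to Y$ is $p$-Right sequentially continuous if it takes $p$-Right Cauchy $U$-bounded sequences of $U$ into norm convergent sequences in $Y$. *)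

(* Defs.v *)
From HB Require Import structures.
From mathcomp Require Import all_boot all_order all_algebra.
From mathcomp Require Import all_classical all_reals all_analysis.
Set Implicit Arguments. Unset Strict Implicit. Unset Printing Implicit Defensive.
Import Order.TTheory GRing.Theory Num.Theory.
Import numFieldNormedType.Exports.
Local Open Scope classical_set_scope.
Local Open Scope ring_scope.

Section Defs.
Context {R : realType}.

Definition is_dual {X : normedModType R} (x' : X -> R) : Prop :=
  (forall (a : R) (u v : X), x' (a *: u + v) = a * x' u + x' v) /\ continuous x'.

Definition dual_norm {X : normedModType R} (x' : X -> R) : R :=
  sup [set `|x' x| | x in [set x : X | `|x| <= 1]].

(* phi is an element of X^** : a bounded linear functional on X^*
   (only its values on X^* matter). *)
Definition is_bidual {X : normedModType R} (phi : (X -> R) -> R) : Prop :=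
  (forall (a : R) (x' y' : X -> R), is_dual x' -> is_dual y' ->
      phi (fun x => a * x' x + y' x) = a * phi x' + phi y') /\
  exists C : R, forall x' : X -> R, is_dual x' -> `|phi x'| <= C * dual_norm x'.

Definition dual_weakly_null {X : normedModType R} (xs : nat -> X -> R) : Prop :=
  (forall n, is_dual (xs n)) /\
  forall phi : (X -> R) -> R, is_bidual phi -> (fun n => phi (xs n)) @ \oo --> (0 : R).

Definition weakly_psummable {X : normedModType R} (p : \bar R) (x : nat -> X) : Prop :=
  forall x' : X -> R, is_dual x' ->
    match p with
    | r%:E => cvg (series (fun n => `|x' (x n)| `^ r) @ \oo)
    | +oo%E => (fun n => x' (x n)) @ \oo --> (0 : R)
    | -oo%E => False
    end.

Definition weakly_pCauchy {X : normedModType R} (p : \bar R) (x : nat -> X) : Prop :=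
  forall m n : nat -> nat, {homo m : i j / (i < j)%N} -> {homo n : i j / (i < j)%N} ->
    weakly_psummable p (fun k => x (m k) - x (n k)).

Definition DP_set {X : normedModType R} (K : set X) : Prop :=
  bounded_set K /\
  forall xs : nat -> X -> R, dual_weakly_null xs ->
    forall eps : R, 0 < eps -> \forall n \near \oo, forall x, K x -> `|xs n x| <= eps.

Definition pRight_null {X : normedModType R} (p : \bar R) (x : nat -> X) : Prop :=
  weakly_psummable p x /\ DP_set (range x).

Definition pRight_Cauchy {X : normedModType R} (p : \bar R) (x : nat -> X) : Prop :=
  weakly_pCauchy p x /\ DP_set (range x).

Definition pDPL_set {X Y : normedModType R} (p : \bar R) (S : set (X -> Y)) : Prop :=
  forall x : nat -> X, pRight_null p x ->
    forall eps : R, 0 < eps -> \forall n \near \oo, forall T, S T -> `|T (x n)| <= eps.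

(* B is U-bounded: B is a bounded subset of U whose distance to the
   boundary of U is strictly positive (vacuous if the boundary is empty). *)
Definition U_bounded {X : normedModType R} (U B : set X) : Prop :=
  B `<=` U /\ bounded_set B /\
  exists r : R, 0 < r /\
    forall b z, B b -> (closure U `\` interior U) z -> r <= `|b - z|.

Definition pRight_seq_continuous {X Y : normedModType R} (p : \bar R) (U : set X)
    (f : X -> Y) : Prop :=
  forall x : nat -> X, pRight_Cauchy p x -> U_bounded U (range x) ->
    cvg ((f \o x) @ \oo).

End Defs.

(* Main.v *)
Require Import Defs.
From HB Require Import structures.
From mathcomp Require Import all_boot all_order all_algebra.
From mathcomp Require Import all_classical all_reals all_analysis.
Import Order.TTheory GRing.Theory Num.Theory.
Import numFieldNormedType.Exports.
Local Open Scope classical_set_scope.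
Local Open Scope ring_scope.

From mathcomp Require Import lra.

Set Implicit Arguments. Unset Strict Implicit. Unset Printing Implicit Defensive.

Section H.

Context {R : realType} {X : normedModType R}.

Lemma conv_in (U : set X) (a b : X) (t : R) :
  convex_set (U : set (convex_lmodType X)) -> U a -> U b -> 0 <= t -> t <= 1 ->
  U (a + t *: (b - a)).
Proof.
move=> cU Ua Ub t0 t1.
have := cU b a (Itv01 t0 t1); rewrite !inE => /(_ Ub Ua).
have -> : (conv (Itv01 t0 t1) (b : convex_lmodType X) a) = a + t *: (b - a).
  rewrite /conv /=.
  by rewrite /unstable.onem scalerBl scale1r scalerBr addrCA.
done.
Qed.

Lemma real_ind (S : set R) :
  (forall s, 0 <= s -> s <= 1 -> (forall u, 0 <= u -> u < s -> S u) -> S s) ->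
  (forall s, 0 <= s -> s < 1 -> S s ->
     exists2 d, 0 < d & forall u, s <= u -> u < s + d -> S u) ->
  S 1.
Proof.
move=> hl hr.
pose A := [set t | 0 <= t <= 1 /\ forall u, 0 <= u -> u <= t -> S u].
have A0 : A 0.
  split; first by rewrite lexx ler01.
  move=> u u0 u0'; have -> : u = 0 by apply/eqP; rewrite eq_le u0 u0'.
  by apply: hl => // v v0 v0'; exfalso; move: (le_lt_trans v0 v0'); rewrite ltxx.
have hsA : has_sup A by split; [exists 0 | exists 1 => t [/andP[]]].
have s0 : 0 <= sup A by apply: sup_upper_bound.
have s1 : sup A <= 1 by apply: ge_sup; [exists 0 | move=> t [/andP[]]].
have below : forall u, 0 <= u -> u < sup A -> S u.
  move=> u u0 us.
  have [t [_ At] ] := sup_adherent (eqbRL (subr_gt0 _ _) us) hsA.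
  rewrite opprB addrCA subrr addr0 => ut.
  by apply: At => //; rewrite ltW.
have Ss : S (sup A) by apply: hl.
have [s_lt1|s_eq1] := ltP (sup A) 1; last first.
  by have -> : (1:R) = sup A by apply/eqP; rewrite eq_le s_eq1 s1.
have [d d0 hd] := hr _ s0 s_lt1 Ss.
pose t := Num.min (sup A + d / 2) 1.
have st : sup A < t.
  by rewrite /t lt_min s_lt1 andbT ltrDl divr_gt0.
have At : A t.
  split.
    by rewrite (ltW (le_lt_trans s0 st)) /t ge_min lexx orbT.
  move=> u u0 ut.
  have [us|su] := ltP u (sup A); first exact: below.
  apply: hd => //; apply: (le_lt_trans ut).
  rewrite /t gt_min; apply/orP; left.
  by rewrite ltrD2l ltr_pdivrMr // ltr_pMr // ltr1n.
by move: (sup_upper_bound hsA At); rewrite leNgt st.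
Qed.

Lemma mvi {Y : normedModType R} (g : R -> Y) (M : R) :
  (forall s, 0 <= s -> s <= 1 -> exists2 d, 0 < d &
     forall u, `|u - s| < d -> `|g u - g s| <= M * `|u - s|) ->
  `|g 1 - g 0| <= M.
Proof.
move=> hg.
suff : `|g 1 - g 0| <= M * 1 by rewrite mulr1.
apply: (@real_ind (fun t => `|g t - g 0| <= M * t)).
- move=> s s0 s1 hb.
  have [s_eq0|s_gt0] := eqVneq s 0.
    by rewrite s_eq0 subrr normr0 mulr0.
  have {}s_gt0 : 0 < s by rewrite lt_neqAle eq_sym s_gt0 s0.
  have [d d0 hd] := hg s s0 s1.
  pose u := Num.max 0 (s - d / 2).
  have u0 : 0 <= u by rewrite /u le_max lexx.
  have us : u < s by rewrite /u gt_max s_gt0 /= gtrBl divr_gt0.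
  have hu : `|u - s| < d.
    rewrite distrC ger0_norm ?subr_ge0 ?(ltW us) //.
    have : s - d / 2 <= u by rewrite /u le_max lexx orbT.
    lra.
  apply: (le_trans (ler_distD (g u) _ _)).
  rewrite distrC; apply: le_trans.
    apply: lerD; first exact: hd.
    exact: hb.
  by rewrite distrC ger0_norm ?subr_ge0 ?(ltW us) // -mulrDr subrK.
- move=> s s0 s1 Ss.
  have [d d0 hd] := hg s s0 (ltW s1).
  exists d => // u su ud.
  apply: (le_trans (ler_distD (g s) _ _)).
  apply: le_trans.
    apply: lerD; last exact: Ss.
    apply: hd; rewrite ger0_norm ?subr_ge0 // ltrBlDl //.
  by rewrite ger0_norm ?subr_ge0 // -mulrDr subrK.
Qed.

Lemma diff_lip {Y : normedModType R} (f : X -> Y) (a d : X) (s e : R) :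
  differentiable f (a + s *: d) -> 0 < e ->
  exists2 del, 0 < del & forall u, `|u - s| < del ->
    `|f (a + u *: d) - f (a + s *: d)| <= (`|'d f (a + s *: d) d| + e) * `|u - s|.
Proof.
set c := a + s *: d => hd e0.
have hd1 : 0 < `|d| + 1 by apply: ltr_wpDl.
have e'0 : 0 < e / (`|d| + 1) by apply: divr_gt0.
have := diff_locally hd.
move/eqaddoP => /(_ _ e'0) /nbhs_norm0P [del del0 H].
exists (del / (`|d| + 1)); first exact: divr_gt0.
move=> u hu.
have hh : `|(u - s) *: d| < del.
  rewrite normrZ; apply: (le_lt_trans (y := `|u - s| * (`|d| + 1))).
    by apply: ler_wpM2l => //; rewrite lerDl.
  by rewrite -ltr_pdivlMr.
have eqh : (u - s) *: d + c = a + u *: d by rewrite /c scalerBl addrCA subrK.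
have HF : `|f ((u - s) *: d + c) - (f c + 'd f c ((u - s) *: d))| <=
   e / (`|d| + 1) * `|(u - s) *: d| := H _ hh.
rewrite eqh linearZ /= in HF.
set F := f (a + u *: d) in HF *; set D := (u - s) *: 'd f c d in HF *.
have -> : F - f c = (F - (f c + D)) + D by rewrite opprD addrA subrK.
apply: (le_trans (ler_normD _ _)).
apply: le_trans; first by apply: lerD; [exact: HF | exact: lexx].
rewrite /D !normrZ.
have k : e / (`|d| + 1) * `|d| <= e.
  by rewrite mulrAC ler_pdivrMr // (ler_wpM2l (ltW e0)) // lerDl.
have A0 : 0 <= `|u - s| by [].
nra.
Qed.

Lemma seg_mvi {Y : normedModType R} (f : X -> Y) (a d : X) (B e : R) :
  (forall t, 0 <= t -> t <= 1 -> differentiable f (a + t *: d)) ->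
  (forall t, 0 <= t -> t <= 1 -> `|'d f (a + t *: d) d| <= B) ->
  0 < e -> `|f (a + d) - f a| <= B + e.
Proof.
move=> hd hB e0.
have := @mvi Y (fun u => f (a + u *: d)) (B + e).
rewrite /= scale1r scale0r addr0; apply => s s0 s1.
have [del del0 H] := diff_lip (hd s s0 s1) e0.
exists del => // u hu; apply: (le_trans (H u hu)).
by apply: ler_wpM2r => //; apply: lerD => //; apply: hB.
Qed.

Lemma dist_seg (a v : X) (s u : R) :
  `|(a + s *: v) - (a + u *: v)| = `|s - u| * `|v|.
Proof. by rewrite opprD addrACA subrr add0r -scalerBl normrZ. Qed.

Lemma near_seg (a v : X) (s eps : R) : 0 < eps ->
  exists2 del, 0 < del & forall u, `|s - u| < del ->
    `|(a + s *: v) - (a + u *: v)| < eps.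
Proof.
move=> e0; have hv : 0 < `|v| + 1 by apply: ltr_wpDl.
exists (eps / (`|v| + 1)); first exact: divr_gt0.
move=> u hu; rewrite dist_seg.
apply: (le_lt_trans (y := `|s - u| * (`|v| + 1))).
  by apply: ler_wpM2l => //; rewrite lerDl.
by rewrite -ltr_pdivlMr.
Qed.

Lemma ball_in (U : set X) (a : X) (r : R) :
  open U -> U a -> (forall z, (closure U `\` interior U) z -> r <= `|a - z|) ->
  forall y, `|y - a| < r -> U y.
Proof.
move=> oU Ua hr y hy.
have -> : y = a + 1 *: (y - a) by rewrite scale1r addrC subrK.
apply: (@real_ind (fun t => U (a + t *: (y - a)))).
- move=> s s0 s1 hb.
  have [s_eq0|s_gt0] := eqVneq s 0.
    by rewrite s_eq0 scale0r addr0.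
  have {}s_gt0 : 0 < s by rewrite lt_neqAle eq_sym s_gt0 s0.
  have [//|nU] := pselect (U (a + s *: (y - a))).
  exfalso.
  have cl : closure U (a + s *: (y - a)).
    move=> B /nbhs_ballP [eps e0 hB].
    have [del del0 hdel] := near_seg a (y - a) s e0.
    pose u := Num.max 0 (s - del / 2).
    have u0 : 0 <= u by rewrite /u le_max lexx.
    have us : u < s by rewrite /u gt_max s_gt0 /= gtrBl divr_gt0.
    have hu : `|s - u| < del.
      rewrite ger0_norm ?subr_ge0 ?(ltW us) //.
      have : s - del / 2 <= u by rewrite /u le_max lexx orbT.
      lra.
    exists (a + u *: (y - a)); split; first exact: hb.
    by apply: hB; rewrite -ball_normE /=; apply: hdel.
  have := hr _ (conj cl (fun h => nU (interior_subset h))).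
  rewrite opprD addrA subrr add0r normrN normrZ ger0_norm //.
  have : s * `|y - a| <= `|y - a| by rewrite ler_piMl.
  lra.
- move=> s s0 s1 Us.
  have : nbhs (a + s *: (y - a)) U by move: oU; rewrite openE; apply.
  move=> /nbhs_ballP [eps e0 hB].
  have [del del0 hdel] := near_seg a (y - a) s e0.
  exists del => // u su ud; apply: hB; rewrite -ball_normE /=; apply: hdel.
  rewrite distrC ger0_norm ?subr_ge0 //; lra.
Qed.

Definition Kseg (x : nat -> X) (m n : nat -> nat) : set X :=
  [set z | exists k t, 0 <= t /\ t <= 1 /\ z = x (n k) + t *: (x (m k) - x (n k))].

Lemma seg_Ubounded (U : set X) (x : nat -> X) (m n : nat -> nat) :
  open U -> convex_set (U : set (convex_lmodType X)) ->
  U_bounded U (range x) -> U_bounded U (Kseg x m n).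
Proof.
move=> oU cU [sub [bd [r [r0 hr]]]].
have Ux : forall k, U (x k) by move=> k; apply: sub; exists k.
split; [|split].
- by move=> z [k [t [t0 [t1 ->]]]]; apply: conv_in.
- move: bd; rewrite /= /bounded_near => bd.
  apply: filterS bd => M hM z [k [t [t0 [t1 ->]]]].
  have ha := hM _ (ex_intro2 _ _ (n k) I erefl).
  have hb := hM _ (ex_intro2 _ _ (m k) I erefl).
  rewrite /= in ha hb *.
  have -> : x (n k) + t *: (x (m k) - x (n k)) = (1 - t) *: x (n k) + t *: x (m k).
    by rewrite scalerBr scalerBl scale1r addrA [RHS]addrAC.
  apply: (le_trans (ler_normD _ _)); rewrite !normrZ !ger0_norm ?subr_ge0 //.
  nra.
- exists r; split => // z w [k [t [t0 [t1 ->]]]] bw.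
  case: (leP r `|x (n k) + t *: (x (m k) - x (n k)) - w|) => // hlt.
  exfalso; case: bw => _; apply.
  move: (oU); rewrite openE; apply.
  set v := w - (x (n k) + t *: (x (m k) - x (n k))).
  have hv : `|v| < r by rewrite /v distrC.
  have Ua : U (x (n k) + v).
    apply: (ball_in oU (Ux (n k))); first by move=> z' bz; apply: hr => //; exists (n k).
    by rewrite addrAC subrr add0r.
  have Ub : U (x (m k) + v).
    apply: (ball_in oU (Ux (m k))); first by move=> z' bz; apply: hr => //; exists (m k).
    by rewrite addrAC subrr add0r.
  have := conv_in cU Ua Ub t0 t1.
  have -> : x (m k) + v - (x (n k) + v) = x (m k) - x (n k) by rewrite opprD addrACA subrr addr0.
  by rewrite /v addrAC addrC subrK.
Qed.

Lemma dual0 (x' : X -> R) : is_dual x' -> x' 0 = 0.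
Proof.
move=> [H _]; have := H 1 0 0; rewrite scale1r addr0 mul1r => h; lra.
Qed.

Lemma dualZ (x' : X -> R) t u : is_dual x' -> x' (t *: u) = t * x' u.
Proof. by move=> hx; have := hx.1 t u 0; rewrite addr0 dual0 // addr0. Qed.

Lemma dualD (x' : X -> R) u v : is_dual x' -> x' (u + v) = x' u + x' v.
Proof. by move=> hx; have := hx.1 1 u v; rewrite scale1r mul1r. Qed.

Lemma dualB (x' : X -> R) u v : is_dual x' -> x' (u - v) = x' u - x' v.
Proof.
move=> hx; rewrite dualD // -scaleN1r dualZ //; lra.
Qed.

Lemma bounded_seg (x : nat -> X) (m n : nat -> nat) :
  bounded_set (range x) -> bounded_set (Kseg x m n).
Proof.
rewrite /= /bounded_near => bd.
apply: filterS bd => M hM z [k [t [t0 [t1 ->]]]].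
have ha := hM _ (ex_intro2 _ _ (n k) I erefl).
have hb := hM _ (ex_intro2 _ _ (m k) I erefl).
rewrite /= in ha hb *.
have -> : x (n k) + t *: (x (m k) - x (n k)) = (1 - t) *: x (n k) + t *: x (m k).
  by rewrite scalerBr scalerBl scale1r addrA [RHS]addrAC.
apply: (le_trans (ler_normD _ _)); rewrite !normrZ !ger0_norm ?subr_ge0 //.
nra.
Qed.

Lemma bounded_diff (x : nat -> X) (m n : nat -> nat) :
  bounded_set (range x) -> bounded_set (range (fun k => x (m k) - x (n k))).
Proof.
rewrite /= /bounded_near => /near_pinfty_div2 bd.
apply: filterS bd => M hM z [k _ <-].
have ha := hM _ (ex_intro2 _ _ (n k) I erefl).
have hb := hM _ (ex_intro2 _ _ (m k) I erefl).
rewrite /= in ha hb *.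
apply: (le_trans (ler_normB _ _)); lra.
Qed.

Lemma DP_seg (x : nat -> X) (m n : nat -> nat) :
  DP_set (range x) -> DP_set (Kseg x m n).
Proof.
move=> [bd hdp]; split; first exact: bounded_seg.
move=> xs hw eps e0.
apply: filterS (hdp xs hw eps e0) => i hi z [k [t [t0 [t1 ->]]]].
have hd := hw.1 i.
rewrite dualD // dualZ // dualB //.
have := hi _ (ex_intro2 _ _ (n k) I erefl).
have := hi _ (ex_intro2 _ _ (m k) I erefl).
rewrite !ler_norml => /andP[h1 h2] /andP[h3 h4].
apply/andP; split; nra.
Qed.

Lemma DP_diff (x : nat -> X) (m n : nat -> nat) :
  DP_set (range x) -> DP_set (range (fun k => x (m k) - x (n k))).
Proof.
move=> [bd hdp]; split; first exact: bounded_diff.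
move=> xs hw eps e0.
have e20 : 0 < eps / 2 by apply: divr_gt0.
apply: filterS (hdp xs hw _ e20) => i hi z [k _ <-].
have hd := hw.1 i.
rewrite dualB //.
have := hi _ (ex_intro2 _ _ (n k) I erefl).
have := hi _ (ex_intro2 _ _ (m k) I erefl).
rewrite !ler_norml => /andP[h1 h2] /andP[h3 h4].
apply/andP; split; lra.
Qed.
End H.

Unset Implicit Arguments.
Set Strict Implicit.


Theorem theorem3p7 (R : realType) (p : \bar R) (X Y : completeNormedModType R)
  (U : set X) (f : X -> Y) :
  (1 <= p)%E ->
  open U ->
  convex_set (U : set (convex_lmodType X)) ->
  (forall x, U x -> differentiable f x) ->
  (forall K : set X, U_bounded U K -> DP_set K ->
     pDPL_set p [set ('d f x : X -> Y) | x in K]) ->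
  pRight_seq_continuous p U f.
Proof.
move=> p1 oU cU hdiff hDPL x [hC hDP] hUb.
apply/cauchy_cvgP; apply/cauchyP => eps e0.
have [[N HN]|nC] := pselect (exists N, forall k, (N <= k)%N -> `|f (x N) - f (x k)| < eps).
  exists (f (x N)); exists N => // k /= hk; rewrite -ball_normE /=; exact: HN.
exfalso.
have H : forall N, exists k, (N <= k)%N /\ eps <= `|f (x N) - f (x k)|.
  move=> N; apply: contrapT => hN; apply: nC; exists N => k hk.
  rewrite ltNge; apply/negP => hle; apply: hN; by exists k.
have [J hJ] := choice H.
pose Nk := fix g k := if k is k'.+1 then (J (g k')).+1 else 0%N.
pose m := Nk; pose n := fun k => J (Nk k).
have hm : {homo m : i j / (i < j)%N}.
  apply: (homo_ltn ltn_trans) => i /=; rewrite ltnS; exact: (hJ _).1.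
have hn : {homo n : i j / (i < j)%N}.
  apply: (homo_ltn ltn_trans) => i /=; rewrite /n /=.
  by apply: (leq_trans _ (hJ _).1).
pose K := Kseg x m n.
have hK := hDPL K (seg_Ubounded m n oU cU hUb) (DP_seg m n hDP).
have e20 : 0 < eps / 2 by apply: divr_gt0.
have e40 : 0 < eps / 4 by apply: divr_gt0.
have [k0 _ hk0] := hK _ (conj (hC m n hm hn) (DP_diff m n hDP)) _ e20.
have {}hk0 := hk0 k0 (leqnn k0).
rewrite /= in hk0.
have Ka : forall t, 0 <= t -> t <= 1 -> K (x (n k0) + t *: (x (m k0) - x (n k0))).
  by move=> t t0 t1; exists k0, t.
have := @seg_mvi R X Y f (x (n k0)) (x (m k0) - x (n k0)) (eps / 2) (eps / 4).
rewrite subrKC => /(_ _ _ e40).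
have : eps <= `|f (x (m k0)) - f (x (n k0))| by exact: (hJ _).2.
move=> h1 h2.
have : `|f (x (m k0)) - f (x (n k0))| <= eps / 2 + eps / 4.
  apply: h2.
  - move=> t t0 t1; apply: hdiff; apply: (seg_Ubounded m n oU cU hUb).1.
    exact: Ka.
  - move=> t t0 t1; apply: hk0; exists (x (n k0) + t *: (x (m k0) - x (n k0))) => //.
    exact: Ka.
lra.
Qed.
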